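(* Under the setting and assumptions in the context, if $\Pr(Y(0)=0,Y(1)=1)>0$, then $$APCE_H=\frac{E[Y\mid Z=1]-E[Y\mid Z=0]}{\Pr(Y(1)=1)-\Pr(Y(0)=1)}.$$
   Context: Units are drawn from a population (a probability space). Each unit has a binary assignment $Z\in\{0,1\}$ with $0<\Pr(Z=1)<1$, binary potential recommendations $R(0),R(1)\in\{0,1\}$, and binary potential outcomes $Y(0),Y(1)\in\{0,1\}$ indexed by the recommendation only (exclusion restriction). Observed quantities are $R=R(Z)$ and $Y=Y(R(Z))$. Assumptions: (Randomization) $Z$ is independent of $(R(0),R(1),Y(0),Y(1))$; (Monotonicity) $Y(1)\ge Y(0)$ almost surely. Principal strata: Always Low $AL=\{Y(0)=Y(1)=0\}$, Always High $AH=\{Y(0)=Y(1)=1\}$, Helpable $H=\{Y(0)=0,Y(1)=1\}$. For a stratum $J$ with positive probability, $APCE_J=E[R(1)-R(0)\mid J]$. *)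

(* Defs.v *)
From HB Require Import structures.
From mathcomp Require Import all_boot all_order all_algebra.
From mathcomp Require Import all_classical all_reals all_analysis.
Set Implicit Arguments. Unset Strict Implicit. Unset Printing Implicit Defensive.
Import Order.TTheory GRing.Theory Num.Theory.
Local Open Scope classical_set_scope.
Local Open Scope ring_scope.

Section Defs.
Context {d : measure_display} {T : measurableType d} {R : realType}.

Definition cexpect (P : probability T R) (X : T -> R) (A : set T) : R :=
  fine (\int[P]_(w in A) (X w)%:E) / fine (P A).

(* Randomization: Z is independent of the vector (R(0),R(1),Y(0),Y(1)).
   Since all variables are boolean, this is the product rule for every
   value b of Z and every set S of values of the vector. *)
Definition indep_Z_vec (P : probability T R) (Z R0 R1 Y0 Y1 : T -> bool) : Prop :=
  forall (b : bool) (S : set (bool * bool * bool * bool)),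
    P ([set w | Z w = b] `&` [set w | S (R0 w, R1 w, Y0 w, Y1 w)])
    = (P [set w | Z w = b] * P [set w | S (R0 w, R1 w, Y0 w, Y1 w)])%E.

Definition obsR (Z R0 R1 : T -> bool) : T -> bool :=
  fun w => if Z w then R1 w else R0 w.
Definition obsY (Z R0 R1 Y0 Y1 : T -> bool) : T -> bool :=
  fun w => if obsR Z R0 R1 w then Y1 w else Y0 w.

Definition helpable (Y0 Y1 : T -> bool) : set T := [set w | ~~ Y0 w && Y1 w].

Definition APCE (P : probability T R) (R0 R1 : T -> bool) (J : set T) : R :=
  cexpect P (fun w => (R1 w)%:R - (R0 w)%:R) J.

End Defs.

(* Main.v *)
Require Import Defs.
From HB Require Import structures.
From mathcomp Require Import all_boot all_order all_algebra.
From mathcomp Require Import all_classical all_reals all_analysis.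
Import Order.TTheory GRing.Theory Num.Theory.
Set Implicit Arguments. Unset Strict Implicit. Unset Printing Implicit Defensive.
Local Open Scope classical_set_scope.
Local Open Scope ring_scope.

Definition lev {T : Type} (X : T -> bool) (a : bool) : set T := [set w | X w = a].

Lemma mlev (d : measure_display) (T : measurableType d) (X : T -> bool)
  (mX : measurable [set w | X w]) a : measurable (lev X a).
Proof.
case: a.
  by have -> : lev X true = [set w | X w] by apply/seteqP; split => w /=.
have -> : lev X false = ~` [set w | X w].
  by apply/seteqP; split => w /=; rewrite /lev /=; case: (X w).
exact: measurableC.
Qed.

Lemma qE (d : measure_display) (T : measurableType d) (R : realType)
  (P : probability T R) A : measurable A -> P A = (fine (P A))%:E.
Proof. by move=> mA; rewrite fineK // fin_num_measure. Qed.

Lemma qsplit (d : measure_display) (T : measurableType d) (R : realType)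
  (P : probability T R) A (X : T -> bool) :
  measurable A -> measurable [set w | X w] ->
  fine (P A) = \sum_(a : bool) fine (P (A `&` lev X a)).
Proof.
move=> mA mX; rewrite big_bool /=.
have := measureDI P mA (mlev mX true).
have -> : A `\` lev X true = A `&` lev X false.
  by apply/seteqP; split => w /=; rewrite /lev /=; case: (X w) => -[].
have m1 := measurableI _ _ mA (mlev mX true).
have m2 := measurableI _ _ mA (mlev mX false).
by move=> ->; rewrite fineD ?fin_num_measure // addrC.
Qed.

Definition cut {T : Type} (R0 R1 Y0 Y1 : T -> bool) (A : set T) a b c e :=
  A `&` lev R0 a `&` lev R1 b `&` lev Y0 c `&` lev Y1 e.

Lemma decomp (d : measure_display) (T : measurableType d) (R : realType)
  (P : probability T R) (R0 R1 Y0 Y1 : T -> bool)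
  (mR0 : measurable [set w | R0 w]) (mR1 : measurable [set w | R1 w])
  (mY0 : measurable [set w | Y0 w]) (mY1 : measurable [set w | Y1 w]) A :
  measurable A ->
  fine (P A) = \sum_(a : bool) \sum_(b : bool) \sum_(c : bool) \sum_(e : bool)
      fine (P (cut R0 R1 Y0 Y1 A a b c e)).
Proof.
move=> mA; rewrite (qsplit P mA mR0); apply: eq_bigr => a _.
have mA1 := measurableI _ _ mA (mlev mR0 a).
rewrite (qsplit P mA1 mR1); apply: eq_bigr => b _.
have mA2 := measurableI _ _ mA1 (mlev mR1 b).
rewrite (qsplit P mA2 mY0); apply: eq_bigr => c _.
have mA3 := measurableI _ _ mA2 (mlev mY0 c).
by rewrite (qsplit P mA3 mY1); apply: eq_bigr => e _.
Qed.

Definition Ef {T : Type} (R0 R1 Y0 Y1 : T -> bool) (f : bool -> bool -> bool -> bool -> bool) : set T :=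
  [set w | f (R0 w) (R1 w) (Y0 w) (Y1 w)].

Lemma cutE {d : measure_display} {T : measurableType d} {R : realType}
  (P : probability T R) (R0 R1 Y0 Y1 : T -> bool) f C a b c e :
  fine (P (cut R0 R1 Y0 Y1 (C `&` Ef R0 R1 Y0 Y1 f) a b c e)) =
  (f a b c e)%:R * fine (P (cut R0 R1 Y0 Y1 C a b c e)).
Proof.
case hf: (f a b c e).
  rewrite mul1r; congr (fine (P _)); apply/seteqP; split => w /=;
    rewrite /cut /lev /Ef /=.
    by move=> [[[[[]]]]].
  by move=> [[[[Cw ra] rb] yc] ye]; rewrite ra rb yc ye.
rewrite mul0r.
have -> : cut R0 R1 Y0 Y1 (C `&` Ef R0 R1 Y0 Y1 f) a b c e = set0.
  apply/seteqP; split => w //=; rewrite /cut /lev /Ef /=.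
  by move=> [[[[[_ fw] ra] rb] yc] ye]; move: fw; rewrite ra rb yc ye hf.
by rewrite measure0.
Qed.

Lemma indE {T : Type} {R : realType} (b : T -> bool) w :
  (b w)%:R = \1_[set w | b w] w :> R.
Proof.
rewrite indicE; case hb: (b w).
  by rewrite mem_set.
by rewrite memNset //= hb.
Qed.

Lemma mconst (d : measure_display) (T : measurableType d) (b : bool) :
  measurable [set _ : T | b].
Proof.
case: b.
  by rewrite (_ : [set _ | _] = setT) //; apply/seteqP; split.
by rewrite (_ : [set _ | _] = set0) //; apply/seteqP; split.
Qed.

Lemma mdep (d : measure_display) (T : measurableType d) (X : T -> bool)
  (g : bool -> T -> bool) : measurable [set w | X w] ->
  (forall a, measurable [set w | g a w]) -> measurable [set w | g (X w) w].
Proof.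
move=> mX mg.
have -> : [set w | g (X w) w] =
  (lev X true `&` [set w | g true w]) `|` (lev X false `&` [set w | g false w]).
  apply/seteqP; split => w /=; rewrite /lev /=.
    by case: (X w) => h; [left|right].
  by case=> -[-> //].
apply: measurableU; apply: measurableI => //; exact: mlev.
Qed.

Lemma mEf (d : measure_display) (T : measurableType d) (R0 R1 Y0 Y1 : T -> bool)
  (mR0 : measurable [set w | R0 w]) (mR1 : measurable [set w | R1 w])
  (mY0 : measurable [set w | Y0 w]) (mY1 : measurable [set w | Y1 w]) f :
  measurable (Ef R0 R1 Y0 Y1 f).
Proof.
rewrite /Ef.
apply: (mdep (g := fun a w => f a (R1 w) (Y0 w) (Y1 w))) => // a.
apply: (mdep (g := fun b w => f a b (Y0 w) (Y1 w))) => // b.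
apply: (mdep (g := fun c w => f a b c (Y1 w))) => // c.
apply: (mdep (g := fun e w => f a b c e)) => // e.
exact: mconst.
Qed.

Lemma qEf (d : measure_display) (T : measurableType d) (R : realType)
  (P : probability T R) (R0 R1 Y0 Y1 : T -> bool)
  (mR0 : measurable [set w | R0 w]) (mR1 : measurable [set w | R1 w])
  (mY0 : measurable [set w | Y0 w]) (mY1 : measurable [set w | Y1 w]) f :
  fine (P (Ef R0 R1 Y0 Y1 f)) =
  \sum_(a : bool) \sum_(b : bool) \sum_(c : bool) \sum_(e : bool)
      (f a b c e)%:R * fine (P (cut R0 R1 Y0 Y1 setT a b c e)).
Proof.
rewrite (decomp P mR0 mR1 mY0 mY1 (mEf mR0 mR1 mY0 mY1 f)).
do 4 (apply: eq_bigr => ? _).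
by rewrite -cutE setTI.
Qed.

Lemma setIb {T : Type} (a b : T -> bool) :
  [set w | a w] `&` [set w | b w] = [set w | a w && b w].
Proof.
apply/seteqP; split => w /=; first by case=> -> ->.
by case/andP=> -> ->.
Qed.

Lemma cexp_ind (d : measure_display) (T : measurableType d) (R : realType)
  (P : probability T R) (b : T -> bool) A :
  measurable A -> measurable [set w | b w] ->
  cexpect P (fun w => (b w)%:R) A = fine (P ([set w | b w] `&` A)) / fine (P A).
Proof.
move=> mA mb; rewrite /cexpect; congr (fine _ / _).
rewrite -integral_indic //; apply: eq_integral => w _.
by rewrite indE.
Qed.

From mathcomp Require Import lra.

Theorem mainTheorem2 (d : measure_display) (T : measurableType d) (R : realType)
  (P : probability T R) (Z R0 R1 Y0 Y1 : T -> bool)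
  (mZ : measurable [set w | Z w]) (mR0 : measurable [set w | R0 w])
  (mR1 : measurable [set w | R1 w]) (mY0 : measurable [set w | Y0 w])
  (mY1 : measurable [set w | Y1 w])
  (hZ : (0 < P [set w | Z w] < 1)%E)
  (hrand : indep_Z_vec P Z R0 R1 Y0 Y1)
  (hmono : {ae P, forall w, (Y0 w <= Y1 w)%N})
  (hH : (0 < P (helpable Y0 Y1))%E) :
  APCE P R0 R1 (helpable Y0 Y1) =
  (cexpect P (fun w => (obsY Z R0 R1 Y0 Y1 w)%:R) [set w | Z w]
   - cexpect P (fun w => (obsY Z R0 R1 Y0 Y1 w)%:R) [set w | ~~ Z w])
  / (fine (P [set w | Y1 w]) - fine (P [set w | Y0 w])).
Proof.
set p := fun a b c e => fine (P (cut R0 R1 Y0 Y1 setT a b c e)).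
have mE := mEf mR0 mR1 mY0 mY1.
have qf := qEf P mR0 mR1 mY0 mY1.
have hzero : forall a b, p a b true false = 0.
  move=> a b; rewrite /p.
  case: hmono => N [mN PN sub].
  have mc : measurable (cut R0 R1 Y0 Y1 setT a b true false).
    rewrite /cut; repeat apply: measurableI => //; exact: mlev.
  have : (P (cut R0 R1 Y0 Y1 setT a b true false) <= P N)%E.
    apply: le_measure; rewrite ?inE //.
    move=> w; rewrite /cut /lev /= => -[[[[_ _] _] y0] y1]; apply: sub => /=.
    by rewrite y0 y1.
  rewrite PN => h; have -> : P (cut R0 R1 Y0 Y1 setT a b true false) = 0%E.
    by apply/eqP; rewrite eq_le h measure_ge0.
  by [].
have mZ0 : measurable [set w | ~~ Z w].
  rewrite (_ : [set w | ~~ Z w] = ~` [set w | Z w]); first exact: measurableC.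
  by apply/seteqP; split => w /=; case: (Z w).
have hZ0 : fine (P [set w | ~~ Z w]) = 1 - fine (P [set w | Z w]).
  rewrite (_ : [set w | ~~ Z w] = ~` [set w | Z w]); last first.
    by apply/seteqP; split => w /=; case: (Z w).
  by rewrite probability_setC // (qE P mZ).
move: hZ; rewrite (qE P mZ) !lte_fin => /andP[z0 z1].
have nz1 : fine (P [set w | Z w]) != 0 by rewrite gt_eqF.
have nz0 : fine (P [set w | ~~ Z w]) != 0 by rewrite hZ0 subr_eq0 gt_eqF.
have ind : forall (b : bool) (f : bool -> bool -> bool -> bool -> bool),
    fine (P ([set w | Z w = b] `&` Ef R0 R1 Y0 Y1 f)) =
    fine (P [set w | Z w = b]) * fine (P (Ef R0 R1 Y0 Y1 f)).
  move=> b f; have := hrand b (fun v => f v.1.1.1 v.1.1.2 v.1.2 v.2).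
  rewrite /= => ->; rewrite fineM //; apply: fin_num_measure;
    [exact: mlev | exact: (mE f)].
have ob1 : [set w | obsY Z R0 R1 Y0 Y1 w] `&` [set w | Z w] =
    [set w | Z w = true] `&` Ef R0 R1 Y0 Y1 (fun a b c e => if b then e else c).
  apply/seteqP; split => w /=; rewrite /obsY /obsR /Ef /=.
    by case=> h zw; rewrite zw in h; split.
  by case=> zw h; rewrite zw; split.
have ob0 : [set w | obsY Z R0 R1 Y0 Y1 w] `&` [set w | ~~ Z w] =
    [set w | Z w = false] `&` Ef R0 R1 Y0 Y1 (fun a b c e => if a then e else c).
  apply/seteqP; split => w /=; rewrite /obsY /obsR /Ef /=.
    by case; case: (Z w).
  by case=> zw h; rewrite zw; split.
have mobs : measurable [set w | obsY Z R0 R1 Y0 Y1 w].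
  rewrite /obsY /obsR.
  apply: (mdep (X := fun w => if Z w then R1 w else R0 w)
            (g := fun a w => if a then Y1 w else Y0 w)).
    by apply: (mdep (g := fun a w => if a then R1 w else R0 w)) => // -[].
  by case.
rewrite !cexp_ind // ob1 ob0 !ind.
rewrite (_ : [set w | Z w = false] = [set w | ~~ Z w]); last first.
  by apply/seteqP; split => w /=; case: (Z w).
rewrite (_ : [set w | Z w = true] = [set w | Z w]) //.
have mk : forall x y : R, x != 0 -> x * y / x = y.
  by move=> x y hx; rewrite mulrAC divff // mul1r.
rewrite !mk //.
rewrite /APCE /cexpect.
have mH : measurable (helpable Y0 Y1) by exact: (mE (fun _ _ c e => ~~ c && e)).
have ->: (\int[P]_(w in helpable Y0 Y1) ((R1 w)%:R - (R0 w)%:R)%:E)%E =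
    (\int[P]_(w in helpable Y0 Y1) (\1_[set w | R1 w] w)%:E
     - \int[P]_(w in helpable Y0 Y1) (\1_[set w | R0 w] w)%:E)%E.
  rewrite -integralB_EFin //.
  - by apply: eq_integral => w _; rewrite -EFinB (indE R1) (indE R0).
  - exact: (integrableS measurableT) (integrable_indic P mR1).
  - exact: (integrableS measurableT) (integrable_indic P mR0).
rewrite !integral_indic // !setIb.
change (fine (P (Ef R0 R1 Y0 Y1 (fun a b c e => b && (~~ c && e))) -
   P (Ef R0 R1 Y0 Y1 (fun a b c e => a && (~~ c && e))))%E
   / fine (P (Ef R0 R1 Y0 Y1 (fun _ _ c e => ~~ c && e))) =
   (fine (P (Ef R0 R1 Y0 Y1 (fun a b c e => if b then e else c))) -
    fine (P (Ef R0 R1 Y0 Y1 (fun a b c e => if a then e else c)))) /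
   (fine (P (Ef R0 R1 Y0 Y1 (fun _ _ _ e => e))) -
    fine (P (Ef R0 R1 Y0 Y1 (fun _ _ c _ => c))))).
rewrite (qE P (mE (fun a b c e => b && (~~ c && e))))
        (qE P (mE (fun a b c e => a && (~~ c && e)))) -EFinB /=.
rewrite !qf !big_bool /=.
rewrite -!/(p _ _ _ _) !hzero.
congr (_ / _); lra.
Qed.
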